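(* For every simple graph $G$ of order $n$, \[ \frac{n}{n - y(G) + 1} < \phi(G) + \frac{1}{3}. \]
   Context: Let $G$ have degrees $d_1 \ge \dots \ge d_n$. The number $y=y(G)$ is the unique real number $1 \le y \le n$ satisfying \[ y(y-1) = \sum_{k=1}^{\lfloor y \rfloor} d_k + (y - \lfloor y \rfloor)\, d_{\lceil y \rceil}. \] $\phi(G)$ is the smallest integer $r$ for which the vertex set has a partition $V(G) = V_1 \cup \dots \cup V_r$ into $r$ parts such that, writing $n_i = |V_i|$, every vertex $v \in V_i$ has degree $d(v) \le n - n_i$, for all $i = 1,\dots,r$. (It is known that $\phi(G)\le\omega(G)$, the clique number.) *)

(* Defs.v *)
From HB Require Import structures.
From mathcomp Require Import all_boot all_order all_algebra.
Set Implicit Arguments. Unset Strict Implicit. Unset Printing Implicit Defensive.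
Import Order.TTheory GRing.Theory Num.Theory.
Local Open Scope ring_scope.

(* A simple graph: a symmetric irreflexive relation e on a finite vertex type T. *)
Definition deg (T : finType) (e : rel T) (v : T) : nat := #|[set u | e v u]|.

(* Degree sequence d_1 >= d_2 >= ... >= d_n, stored 0-based: d_k = nth 0 (degseq e) (k-1). *)
Definition degseq (T : finType) (e : rel T) : seq nat :=
  sort geq [seq deg e v | v <- enum T].

(* y = y(G): 1 <= y <= n and
   y(y-1) = sum_{k=1}^{floor y} d_k + (y - floor y) d_{ceil y},
   where k denotes floor y (k <= y < k+1) and ceil y = k if y = k, else k+1. *)
Definition is_y (T : finType) (e : rel T) (R : rcfType) (y : R) : Prop :=
  let ds := degseq e in
  
  let n := #|T| in
  (1 <= y)%R /\ (y <= (n%:R)%R)%R /\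
  exists k : nat, ((k%:R)%R <= y)%R /\ (y < (k.+1%:R)%R)%R /\
    let c := if y == (k%:R)%R then k else k.+1 in
    (y * (y - 1) = \sum_(i < k) (nth 0%N ds i)%:R
                   + (y - k%:R) * (nth 0%N ds c.-1)%:R)%R.

(* A partition V = V_1 u ... u V_r, encoded by f : T -> 'I_r (part of v is f v),
   such that every v in V_i has d(v) <= n - n_i. *)
Definition phi_feasible (T : finType) (e : rel T) (r : nat) : bool :=
  [exists f : {ffun T -> 'I_r},
     [forall v : T, (deg e v <= #|T| - #|[set u | f u == f v]|)%N ]].

Definition is_phi (T : finType) (e : rel T) (r : nat) : Prop :=
  phi_feasible e r /\ forall r', phi_feasible e r' -> (r <= r')%N.

(* Main.v *)
Require Import Defs.
From HB Require Import structures.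
From mathcomp Require Import all_boot all_order all_algebra.
From mathcomp Require Import ring lra.
Import Order.TTheory GRing.Theory Num.Theory.
Set Implicit Arguments. Unset Strict Implicit. Unset Printing Implicit Defensive.
Local Open Scope ring_scope.

Lemma E_ge0 (R : rcfType) (s a0 M n : R) : 0 <= s -> n = a0 * (3 * s + 4) / 3 ->
  0 <= s * (a0 * a0 - a0 * (n + M) + M * M) + (n - M) * (n - M).
Proof.
move=> s0 hn.
have hid : 4 * (s + 1) * (s * (a0 * a0 - a0 * (n + M) + M * M) + (n - M) * (n - M))
   = (2 * (s+1) * M - (s + 2 * (s + 4/3)) * a0) ^+ 2 + s * (s / 3 + 4 / 9) * (a0 * a0).
  by rewrite hn; field.
have h1 : 0 <= (2 * (s+1) * M - (s + 2 * (s + 4/3)) * a0) ^+ 2 by apply: sqr_ge0.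
have h2 : 0 <= s * (s / 3 + 4 / 9) * (a0 * a0).
  apply: mulr_ge0; last by nra.
  apply: mulr_ge0 => //; lra.
have h3 : 0 <= 4 * (s + 1) * (s * (a0 * a0 - a0 * (n + M) + M * M) + (n - M) * (n - M)) by rewrite hid; lra.
have h4 : 0 < 4 * (s + 1) by lra.
by rewrite -(pmulr_rge0 _ h4).
Qed.
Lemma real_main (R : rcfType) (n M q y r : R) :
  (r = 1 \/ 2 <= r) -> 1 <= y -> y <= n -> 0 <= M -> M <= n -> n <= r * M -> M * M <= q ->
  (forall t, 2 * t * (n - M) - (r - 1) * (t * t) <= q - M * M) ->
  y * (y - 1) <= (n - M) * y + n * M - q ->
  n / (n - y + 1) < r + 1 / 3.
Proof.
move=> hr hy1 hyn hM0 hMn hnr hqM HQ H.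
have [a ha] : exists a, a = n - y + 1 by exists (n - y + 1).
rewrite -ha.
have a1 : 1 <= a by lra.
have ey : y = n + 1 - a by lra.
rewrite ey in H.
have g : a * a - a * (n + 1 + M) + M + q <= 0 by nra.
rewrite ltr_pdivrMr; last by lra.
rewrite ltNge; apply/negP => Hc.
case: hr => [r1|r2].
  rewrite r1 in hnr Hc.
  have eM : M = n by lra.
  rewrite eM in g hqM.
  have h1 : 0 < n - a by lra.
  have h2 : 0 < n + 1 - a by lra.
  nra.
set s := r - 1.
have s1 : 1 <= s by rewrite /s; lra.
have [a0 ha0] : exists a0, a0 = n * 3 / (3 * s + 4) by exists (n * 3 / (3 * s + 4)).
have p34 : 0 < 3 * s + 4 by lra.
have en : n = a0 * (3 * s + 4) / 3 by rewrite ha0; field; lra.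
have hq : (n - M) * (n - M) <= s * (q - M * M).
  have := HQ ((n - M) / s).
  have -> : 2 * ((n - M) / s) * (n - M) - (r - 1) * ((n - M) / s * ((n - M) / s))
          = (n - M) * (n - M) / s by rewrite -/s; field; lra.
  rewrite ler_pdivrMr; last lra. nra.
have hE := @E_ge0 R s a0 M n (le_trans ler01 s1) en.
have hF : 0 <= a0 * a0 - a0 * (n + M) + q.
  have : 0 <= s * (a0 * a0 - a0 * (n + M) + q) by nra.
  by rewrite pmulr_rge0; lra.
have n0 : 0 < n by lra.
have ha0M : a0 < M.
  have : r * a0 < n.
    rewrite en /s; nra.
  nra.
have haa0 : a <= a0.
  have : a * (3 * s + 4) <= 3 * n by rewrite /s in Hc *; lra.
  rewrite en; nra.
have hsum : a + a0 <= n + 1 + M.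
  have : a0 * 7 <= 3 * n by rewrite en; nra.
  lra.
have : 0 <= (a0 - a) * (n + 1 + M - a - a0) by apply: mulr_ge0; lra.
nra.
Qed.

Lemma nth_sum_le (R : rcfType) (phi : nat -> R) (s : seq nat) (m : nat) :
  (forall d, 0 <= phi d) -> phi 0%N = 0 ->
  \sum_(j < m) phi (nth 0%N s j) <= \sum_(d <- s) phi d.
Proof.
move=> p0 pz; elim: s m => [|x s IH] m.
  rewrite big_nil big1 // => j _; by rewrite nth_nil.
case: m => [|m].
  rewrite big_ord0 big_cons; apply: addr_ge0 => //; exact: sumr_ge0.
rewrite big_ord_recl big_cons /=; apply: lerD => //.
exact: IH.
Qed.

Lemma y_bound (T : finType) (e : rel T) (R : rcfType) (y c : R) :
  is_y e y -> 0 <= c ->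
  y * (y - 1) <= c * y + \sum_(v : T) Num.max 0 ((deg e v)%:R - c).
Proof.
move=> [y1 [yn [k [hk1 [hk2 Hy]]]]] c0.
set phi := fun d : nat => Num.max 0 (d%:R - c).
have p0 : forall d, 0 <= phi d by move=> d; rewrite /phi le_max lexx.
have pz : phi 0%N = 0 by rewrite /phi sub0r; apply/max_idPl; rewrite oppr_le0.
have pd : forall d : nat, d%:R <= c + phi d.
  by move=> d; rewrite /phi -lerBlDl le_max lexx orbT.
set ds := degseq e in Hy.
have Hy' : y * (y - 1) = \sum_(i < k) (nth 0%N ds i)%:R + (y - k%:R) * (nth 0%N ds k)%:R.
  rewrite Hy; case: eqP => [->|_] //=; by rewrite subrr !mul0r.
have hsum : \sum_(i < k) (nth 0%N ds i)%:R <= k%:R * c + \sum_(i < k) phi (nth 0%N ds i).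
  apply: le_trans (_ : \sum_(i < k) (c + phi (nth 0%N ds i)) <= _).
    by apply: ler_sum => i _; apply: pd.
  by rewrite big_split /= sumr_const card_ord mulr_natl.
have hlast : (y - k%:R) * (nth 0%N ds k)%:R <= (y - k%:R) * c + phi (nth 0%N ds k).
  have := pd (nth 0%N ds k); have := p0 (nth 0%N ds k).
  have : 0 <= y - k%:R by lra.
  have : y - k%:R <= 1 by rewrite -addn1 natrD in hk2; lra.
  nra.
have hall : \sum_(j < k.+1) phi (nth 0%N ds j) <= \sum_(d <- ds) phi d by apply: nth_sum_le.
have hperm : \sum_(d <- ds) phi d = \sum_(v : T) phi (deg e v).
  rewrite /ds /degseq (perm_big _ (permEl (perm_sort _ _))) big_map big_enum //.
rewrite big_ord_recr /= in hall.
rewrite Hy' -hperm.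
lra.
Qed.

Theorem theorem11 (T : finType) (e : rel T)
  (esym : symmetric e) (eirr : irreflexive e)
  (R : rcfType) (y : R) (r : nat) :
  is_y e y -> is_phi e r ->
  (#|T|%:R / (#|T|%:R - y + 1) < r%:R + 1 / 3%:R)%R.
Proof.
move=> Hy [Hf _].
have [y1 [yn _]] := Hy.
set n := #|T| in yn *.
have n1 : (0 < n)%N by rewrite -(ltr_nat R); lra.
move/existsP: Hf => [f /forallP Hf].
have [v0 _] : exists v0 : T, v0 \in T by apply/card_gt0P.
set x := fun v : T => #|[set u | f u == f v]|.
set cnt := fun i : 'I_r => #|[set u | f u == i]|.
have xc : forall v, x v = cnt (f v) by [].
set M := (\max_v x v)%N.
have xM : forall v, (x v <= M)%N.
  by move=> v; exact: (@leq_bigmax _ x v).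
have [vm hvm] : exists vm, M = x vm.
  by exists [arg max_(i > v0) x i]; exact: bigop.bigmax_eq_arg.
set i0 := f vm.
have cM : forall i, (cnt i <= M)%N.
  move=> i; case: (pickP (fun u => f u == i)) => [u /eqP fu | none].
    rewrite -fu; exact: xM u.
  suff -> : cnt i = 0%N by [].
  apply/eqP; rewrite cards_eq0; apply/eqP/setP => u; by rewrite inE in_set0 none.
have sumc : \sum_i cnt i = n.
  rewrite /n -sum1_card (partition_big f xpredT) //=.
  apply: eq_bigr => i _; rewrite /cnt -sum1_card; apply: eq_bigl => u; by rewrite inE.
have sumq : \sum_v x v = \sum_i cnt i * cnt i.
  rewrite (partition_big f xpredT) //=.
  apply: eq_bigr => i _.
  rewrite (eq_bigr (fun=> cnt i)); last by move=> v /eqP <-.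
  rewrite sum_nat_const; congr (_ * _); rewrite /cnt; apply: eq_card => u; by rewrite inE.
have r0 : (0 < r)%N by case: (f v0) => j; apply: leq_ltn_trans.
have Mn : (M <= n)%N by rewrite hvm; exact: max_card.
have nrM : (n <= r * M)%N.
  rewrite -sumc; apply: leq_trans (_ : \sum_(i < r) M <= _)%N.
    by apply: leq_sum => i _; exact: cM.
  by rewrite sum_nat_const card_ord.
have Mi0 : M = cnt i0 by rewrite hvm.
have MMq : (M * M <= \sum_v x v)%N.
  by rewrite sumq (bigD1 i0) //= -Mi0 leq_addr.
have xn : forall v, (x v <= n)%N by move=> v; exact: max_card.
apply: (@real_main R n%:R M%:R (\sum_v x v)%:R y r%:R).
- case: (ltnP 1 r) => h; first by right; rewrite ler_nat.
  left; have -> : r = 1%N by apply/anti_leq; rewrite h r0.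
  by [].
- exact: y1.
- exact: yn.
- exact: ler0n.
- by rewrite ler_nat.
- by rewrite -natrM ler_nat.
- by rewrite -natrM ler_nat.
- move=> t.
  have hn : n%:R = (cnt i0)%:R + \sum_(i | i != i0) (cnt i)%:R :> R.
    by rewrite -sumc natr_sum (bigD1 i0).
  have hq : (\sum_v x v)%:R = (cnt i0)%:R * (cnt i0)%:R + \sum_(i | i != i0) (cnt i)%:R * (cnt i)%:R :> R.
    by rewrite sumq natr_sum (bigD1 i0) //= !natrM; congr (_ + _); apply: eq_bigr => i _; rewrite natrM.
  have hr : \sum_(i | i != i0) (1 : R) = r%:R - 1.
    rewrite sumr_const cardC1 card_ord -(prednK r0) /= -addn1 natrD addrK.
    by [].
  have key : \sum_(i | i != i0) (2 * t * (cnt i)%:R - t * t) <= \sum_(i | i != i0) (cnt i)%:R * (cnt i)%:R.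
    by apply: ler_sum => i _; have := sqr_ge0 ((cnt i)%:R - t : R); nra.
  have ht : \sum_(i | i != i0) (t * t) = (r%:R - 1) * (t * t) :> R.
    by rewrite -hr mulr_suml; apply: eq_bigr => i _; rewrite mul1r.
  rewrite sumrB -mulr_sumr ht in key.
  rewrite hn hq Mi0; lra.
- have c0 : 0 <= n%:R - M%:R :> R by rewrite subr_ge0 ler_nat.
  have H := y_bound Hy c0.
  have hphi : \sum_v Num.max 0 ((deg e v)%:R - (n%:R - M%:R)) <= \sum_v (M%:R - (x v)%:R) :> R.
    apply: ler_sum => v _; rewrite ge_max subr_ge0 ler_nat xM /=.
    have := Hf v; rewrite -(ler_nat R) natrB ?xn // => hd.
    lra.
  have hs : \sum_v (M%:R - (x v)%:R) = n%:R * M%:R - (\sum_v x v)%:R :> R.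
    by rewrite sumrB sumr_const natr_sum mulr_natl.
  lra.
Qed.
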